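(* Let $m\ge2$, $n\ge1$, and for $w\in G(m,1,n)$ let $\mathrm{inv}(w)=\sum_{i=1}^n\mathrm{inv}_i(w)$ $(=L(w))$. Then $$\sum_{w\in G(m,1,n)}q^{\mathrm{inv}(w)}=\sum_{w\in G(m,1,n)}q^{L(w)}=\prod_{i=1}^n[im]_q,\qquad [k]_q=\frac{1-q^k}{1-q}.$$
   Context: $\varepsilon=e^{2\pi i/m}$; $e_1,\dots,e_n$ the standard basis of $\mathbb C^n$. $G(m,1,n)$ is the group of $n\times n$ monomial matrices whose nonzero entries are $m$-th roots of unity; $w$ is written $w(j)=\varepsilon^{r_j}\beta_j$ ($\beta\in S_n$, $0\le r_j\le m-1$) and acts by $w(e_j)=\varepsilon^{r_j}e_{\beta_j}$. Let $\Phi=\{\varepsilon^ie_j-\varepsilon^ke_l:\varepsilon^ie_j\ne\varepsilon^ke_l,\ 0\le i,k\le m-1,\ 1\le j,l\le n\}$, $\Phi^+=\{\varepsilon^ie_j-\varepsilon^ke_j:0\le i<k\le m-1\}\cup\{e_j-\varepsilon^ke_l:0\le k\le m-1,\ 1\le l<j\le n\}\cup\{\varepsilon^ie_j-\varepsilon^ke_l: 0\le i,k\le m-1,\ k\ne0,\ 1\le j<l\le n\}$, $\Phi^-=\Phi\setminus\Phi^+$, $\Delta=\{e_j-\varepsilon^ke_l\in\Phi: 0\le k\le m-1,\ 1\le l\le j\le n\}$, $L(w)=|w(\Delta)\cap\Phi^-|$. For $i=1,\dots,n$, $\Delta_i=\{e_{n+1-i}-\varepsilon^ke_{n+1-i}:0<k\le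 m-1\}\cup\{e_{n+1-i}-\varepsilon^ke_j:0\le k\le m-1,\ j<n+1-i\}$ and $\mathrm{inv}_i(w)=|w(\Delta_i)\cap\Phi^-|$. *)

(* Defs.v *)
From mathcomp Require Import all_boot all_order all_algebra all_fingroup.
Set Implicit Arguments. Unset Strict Implicit. Unset Printing Implicit Defensive.
Import GRing.Theory.

(* Conventions (0-based indices): coordinates j : 'I_n stand for e_(j+1);
   exponents i : 'I_m stand for eps^i with eps = exp(2 pi i/m).           *)

(* An element w of G(m,1,n), written w(j) = eps^(r_j) beta_j, encoded as the
   pair (beta, r) ; w(e_j) = eps^(r_j) e_(beta j).                        *)
Definition Gm1n (n m : nat) := ({perm 'I_n} * {ffun 'I_n -> 'I_m})%type.

(* "signed basis vector" eps^i e_j, encoded as (i, j) *)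
Definition sbv (n m : nat) := ('I_m * 'I_n)%type.

(* formal root eps^i e_j - eps^k e_l, encoded as ((i,j),(k,l)) *)
Definition root_t (n m : nat) := (sbv n m * sbv n m)%type.

(* exponent addition modulo m (the default is never used when m > 0) *)
Definition addE (m : nat) (a b : 'I_m) : 'I_m := insubd a ((a + b) %% m).

Section Roots.
Variables (n m : nat).

Definition Phi : {set root_t n m} := [set x | x.1 != x.2].

Definition is_pos (x : root_t n m) : bool :=
  let: ((i, j), (k, l)) := x in
  [|| (j == l) && (i < k)%N ,
      (nat_of_ord i == 0%N) && (l < j)%N
    | (nat_of_ord k != 0%N) && (j < l)%N ].

Definition Phip : {set root_t n m} := [set x in Phi | is_pos x].
Definition Phim : {set root_t n m} := Phi :\: Phip.

Definition Delta : {set root_t n m} :=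
  [set x in Phi | (nat_of_ord x.1.1 == 0%N) && (x.2.2 <= x.1.2)%N].

(* Delta_i for 1 <= i <= n : the coordinate n+1-i (1-based) is n-i (0-based) *)
Definition Delta_i (i : nat) : {set root_t n m} :=
  [set x | [&& nat_of_ord x.1.1 == 0%N, nat_of_ord x.1.2 == (n - i)%N &
     ((x.2.2 == x.1.2) && (nat_of_ord x.2.1 != 0%N)) || (x.2.2 < x.1.2)%N]].

Definition act_sbv (w : Gm1n n m) (a : sbv n m) : sbv n m :=
  (addE a.1 (w.2 a.2), w.1 a.2).

Definition act_root (w : Gm1n n m) (x : root_t n m) : root_t n m :=
  (act_sbv w x.1, act_sbv w x.2).

Definition L (w : Gm1n n m) : nat :=
  #|[set act_root w x | x in Delta] :&: Phim|.

Definition inv_i (w : Gm1n n m) (i : nat) : nat :=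
  #|[set act_root w x | x in Delta_i i] :&: Phim|.

Definition invt (w : Gm1n n m) : nat := \sum_(1 <= i < n.+1) inv_i w i.

End Roots.

(* q-integer [k]_q = (1 - q^k)/(1 - q) = 1 + q + ... + q^(k-1), as a polynomial in q *)
Definition qint (k : nat) : {poly int} := \sum_(j < k) 'X^j.

(* Main.v *)
Require Import Defs.
From mathcomp Require Import all_boot all_order all_algebra all_fingroup.
From mathcomp Require Import zify.
Import GRing.Theory.

Lemma sum_pair (I J : finType) (G : I * J -> nat) :
  \sum_p G p = \sum_i \sum_j G (i, j).
Proof. by rewrite (pair_bigA _ (fun i j => G (i, j))); apply: eq_bigr => -[]. Qed.

Lemma sum_ge N a : \sum_(i < N) (a <= i : nat) = N - a.
Proof.
elim: N => [|N IH]; first by rewrite big_ord0.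
rewrite big_ord_recr /= IH; case: (leqP a N) => h; lia.
Qed.

Lemma sum_lt N a : \sum_(i < N) (i < a : nat) = minn a N.
Proof.
elim: N => [|N IH]; first by rewrite big_ord0 minn0.
rewrite big_ord_recr /= IH; case: (leqP a N) => h; lia.
Qed.

Lemma sum_eq N c : \sum_(i < N) ((i == c :> nat) : nat) = (c < N).
Proof.
elim: N => [|N IH]; first by rewrite big_ord0.
rewrite big_ord_recr /= IH; lia.
Qed.

Lemma card_imI (T : finType) (f : T -> T) (A B : {set T}) : injective f ->
  #|f @: A :&: B| = #|[set x in A | f x \in B]|.
Proof.
move=> finj; rewrite -[RHS](card_imset _ finj); apply: eq_card => y.
rewrite !inE; apply/andP/imsetP.
- by case=> /imsetP [x xA ->] fxB; exists x => //; rewrite inE xA.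
- by case=> x; rewrite inE => /andP [xA fxB] ->; rewrite imset_f.
Qed.

Lemma card_sum (T : finType) (P : pred T) : #|[set x | P x]| = \sum_x (P x : nat).
Proof.
rewrite -sum1_card big_mkcond /=; apply: eq_bigr => x _; rewrite inE; by case: (P x).
Qed.

Lemma modD_small2 a b N : a < N -> b < N ->
  (a + b) %% N = if a + b < N then a + b else a + b - N.
Proof.
move=> ha hb; case: ifP => h; first by rewrite modn_small.
have -> : a + b = (a + b - N) + N by lia.
by rewrite modnDr modn_small //; lia.
Qed.

Lemma modB_small c N : c < N -> (N - c) %% N = if c == 0 then 0 else N - c.
Proof.
move=> hc; case: eqP => [->|h]; first by rewrite subn0 modnn.
by rewrite modn_small //; lia.
Qed.

Section Main.
Variables (n m : nat).
Notation M := m.+1.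
Notation G := (Gm1n n M).

Lemma val_addE (a b : 'I_M) : val (addE a b) = (a + b) %% M.
Proof. by rewrite /addE val_insubd ltn_pmod. Qed.

Lemma act_sbv_inj (w : G) : injective (act_sbv w).
Proof.
move=> [a1 a2] [b1 b2] [] E1 /perm_inj E2; subst b2; congr (_, _).
apply: val_inj; move: (congr1 val E1); rewrite !val_addE => /eqP.
by rewrite eqn_modDr !modn_small // => /eqP.
Qed.

Lemma act_root_inj (w : G) : injective (act_root w).
Proof.
move=> [x1 x2] [y1 y2] E.
move: (congr1 fst E) (congr1 snd E) => /= /(@act_sbv_inj w) -> /(@act_sbv_inj w) -> //.
Qed.


Definition cnt (w : G) (p : nat) := #|[set x in Delta n M |
   (x.1.2 == p :> nat) && (act_root w x \in Phim n M)]|.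

Lemma L_cnt w : L w = \sum_(p < n) cnt w p.
Proof.
rewrite /L card_imI; last exact: act_root_inj.
rewrite -sum1_card (partition_big (fun x : root_t n M => x.1.2) predT) //=.
apply: eq_bigr => p _; rewrite /cnt -sum1_card; apply: eq_bigl => x.
rewrite !inE.
have -> : (x.1.2 == p :> nat) = (x.1.2 == p) by [].
by case: (x.1.2 == p); rewrite ?andbT ?andbF.
Qed.


Lemma inv_cnt w i : inv_i w i = cnt w (n - i).
Proof.
rewrite /inv_i card_imI; last exact: act_root_inj.
apply: eq_card => x; rewrite !in_set; move: (act_root w x) => y.
case: (y.1 != y.2); case: (is_pos y); rewrite /= ?andbT ?andbF //.
move: x => [[a b] [c d]] /=; rewrite xpair_eqE -!val_eqE /=.
by apply/idP/idP; lia.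
Qed.


Lemma invt_L (w : G) : invt w = L w.
Proof.
rewrite /invt L_cnt -(big_mkord xpredT (cnt w)).
rewrite (eq_bigr (fun i => cnt w (n - i))); last by move=> i _; rewrite inv_cnt.
rewrite big_add1 /= big_nat_rev /=.
apply: eq_big_nat => i /andP [_ hi]; congr cnt; lia.
Qed.


Lemma sum_root (F : root_t n M -> nat) :
  \sum_x F x = \sum_(i : 'I_M) \sum_(j : 'I_n) \sum_(k : 'I_M) \sum_(l : 'I_n) F ((i, j), (k, l)).
Proof.
rewrite sum_pair sum_pair; apply: eq_bigr => i _; apply: eq_bigr => j _.
by rewrite sum_pair.
Qed.

Definition Acode (b : {perm 'I_n}) (p : 'I_n) := \sum_(l < n) ((l < p) && (b p < b l) : nat).
Definition Bcode (b : {perm 'I_n}) (p : 'I_n) := \sum_(l < n) ((l < p) && (b l < b p) : nat).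

Lemma term_k (b : {perm 'I_n}) (r : {ffun 'I_n -> 'I_M}) (p l : 'I_n) (k : 'I_M) :
  ((((ord0, p), (k, l)) \in Delta n M) &&
   ((p == p :> nat) && (act_root (b, r) ((ord0, p), (k, l)) \in Phim n M))) =
  [&& l <= p, ((ord0, p) != (k, l)) &
   ~~ is_pos (act_root (b, r) ((ord0, p), (k, l)))].
Proof.
rewrite !in_set eqxx /=.
case: eqP => [E|NE] /=; first by rewrite andbF.
have -> : act_sbv (b, r) (ord0, p) != act_sbv (b, r) (k, l).
  by apply/eqP => /(@act_sbv_inj (b, r)).
rewrite /= andbT.
by [].
Qed.


Lemma sum_k (b : {perm 'I_n}) (r : {ffun 'I_n -> 'I_M}) (p l : 'I_n) :
  \sum_(k < M) ([&& l <= p, ((ord0, p) != (k, l)) &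
   ~~ is_pos (act_root (b, r) ((ord0, p), (k, l)))] : nat) =
  if l == p then (r p : nat) else if l < p then (if b p < b l then 1 else (0 < r p) * M) else 0.
Proof.
case: (ltngtP l p) => hlp.
- have bne : (b l == b p :> nat) = false.
    apply/negP; rewrite val_eqE => /eqP /perm_inj E; move: hlp; rewrite E; lia.
  have lp : (l == p) = false by apply/negP => /eqP E; move: hlp; rewrite E; lia.
  rewrite lp.
  case: (ltnP (b p) (b l)) => hb.
  + rewrite (eq_bigr (fun k : 'I_M => ((k == (M - r l) %% M :> nat) : nat))).
      by rewrite sum_eq ltn_pmod.
    move=> k _; rewrite /is_pos /= xpair_eqE -!val_eqE /= !val_addE.
    congr nat_of_bool; move: (ltn_ord k) (ltn_ord (r l)) (ltn_ord (r p)) bne hb hlp.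
    change (nat_of_ord (@ord0 m)) with 0%N.
    move: (nat_of_ord (b p)) (nat_of_ord (b l)) (nat_of_ord k) (nat_of_ord (r l)) (nat_of_ord (r p)) => bp bl k' rl rp *.
    rewrite add0n modn_small // modD_small2 // ?modB_small //.
    by case: ifP; case: ifP; move=> *; apply/idP/idP; lia.
  + rewrite (eq_bigr (fun k : 'I_M => ((0 < r p) : nat))).
      by rewrite sum_nat_const card_ord mulnC.
    move=> k _; rewrite /is_pos /= xpair_eqE -!val_eqE /= !val_addE.
    congr nat_of_bool; move: (ltn_ord k) (ltn_ord (r l)) (ltn_ord (r p)) bne hb hlp.
    change (nat_of_ord (@ord0 m)) with 0%N.
    move: (nat_of_ord (b p)) (nat_of_ord (b l)) (nat_of_ord k) (nat_of_ord (r l)) (nat_of_ord (r p)) => bp bl k' rl rp *.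
    rewrite add0n modn_small // modD_small2 //.
    by case: ifP => *; apply/idP/idP; lia.
- have lp : (l == p) = false by apply/negP => /eqP E; move: hlp; rewrite E; lia.
  by rewrite lp big1.
- have E : l = p by apply: val_inj.
  subst l; rewrite eqxx.
  rewrite (eq_bigr (fun k : 'I_M => ((M - r p <= k) : nat))).
    by rewrite sum_ge; move: (ltn_ord (r p)); lia.
  move=> k _; rewrite /is_pos /= xpair_eqE -!val_eqE /= !val_addE.
  congr nat_of_bool; move: (ltn_ord k) (ltn_ord (r p)).
  change (nat_of_ord (@ord0 m)) with 0%N.
  move: (nat_of_ord (b p)) (nat_of_ord k) (nat_of_ord (r p)) => bp k' rp *.
  rewrite add0n modn_small // modD_small2 //.
  by case: ifP; move=> *; apply/idP/idP; lia.
Qed.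


Lemma cnt_formula (b : {perm 'I_n}) (r : {ffun 'I_n -> 'I_M}) (p : 'I_n) :
  cnt (b, r) p = r p + Acode b p + (0 < r p) * M * Bcode b p.
Proof.
rewrite /cnt card_sum sum_root big_ord_recl.
rewrite [X in _ + X]big1 ?addn0; last first.
  move=> i _; apply: big1 => j _; apply: big1 => k _; apply: big1 => l _.
  by rewrite in_set /= andbF.
rewrite (bigD1 p) /=; last by [].
rewrite [X in _ + X]big1 ?addn0; last first.
  move=> j /negbTE jp; apply: big1 => k _; apply: big1 => l _.
  by rewrite -val_eqE /= in jp; rewrite jp !andbF.
under eq_bigr => k _ do under eq_bigr => l _ do rewrite term_k.
rewrite exchange_big /=.
under eq_bigr => l _ do rewrite sum_k.
rewrite (bigD1 p) //= eqxx -addnA; congr (_ + _).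
rewrite /Acode /Bcode big_distrr -big_split /= [RHS](bigD1 p) //= ltnn /= muln0 add0n.
apply: eq_bigr => l /negbTE lp; rewrite lp.
have bne : (b l == b p :> nat) = false.
  apply/negP; rewrite val_eqE => /eqP /perm_inj E; by rewrite E eqxx in lp.
case: (ltnP l p) => hl /=.
2: by rewrite muln0.

case: (ltnP (b p) (b l)) => hb /=.
  have -> : (b l < b p) = false by apply/negbTE; rewrite -leqNgt ltnW.
  by rewrite muln0 addn0.
have -> : b l < b p by rewrite ltn_neqAle hb bne.
by rewrite /= muln1.
Qed.


Lemma AB_sum (b : {perm 'I_n}) (p : 'I_n) : Acode b p + Bcode b p = p.
Proof.
rewrite /Acode /Bcode -big_split /=.
rewrite (eq_bigr (fun l : 'I_n => (l < p : nat))); first by rewrite sum_lt; apply/minn_idPl/ltnW.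
move=> l _; case: (ltnP l p) => hl //=.
have bne : (b l == b p :> nat) = false.
  apply/negP; rewrite val_eqE => /eqP /perm_inj E; by move: hl; rewrite E ltnn.
case: (ltngtP (b p) (b l)) => hb //.
by move: bne; rewrite hb eqxx.
Qed.

Lemma mod_uniq d s s' B B' : s < d -> s' < d -> s + d * B = s' + d * B' -> s = s' /\ B = B'.
Proof.
move=> hs hs' E.
have h1 : (s + d * B) %/ d = B by rewrite mulnC divnDMl ?divn_small ?add0n //; lia.
have h2 : (s' + d * B') %/ d = B' by rewrite mulnC divnDMl ?divn_small ?add0n //; lia.
have EB : B = B' by rewrite -h1 -h2 E.
by split => //; move: E; rewrite EB; lia.
Qed.

Lemma f_inj r r' A A' B B' p : r < M -> r' < M -> A + B = p -> A' + B' = p ->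
  r + A + (0 < r) * M * B = r' + A' + (0 < r') * M * B' -> r = r' /\ A = A'.
Proof.
move=> hr hr' hAB hAB'.
case: r hr => [|r] hr; case: r' hr' => [|r'] hr' /=; rewrite ?mul0n ?mul1n ?addn0 ?add0n.
- by move=> ->.
- move=> E; exfalso; have : r' + A' + M * B' <= A' + B' by lia.
  nia.
- move=> E; exfalso; have : r + A + M * B <= A + B by lia.
  nia.
- move=> E.
  have E2 : r + m * B = r' + m * B' by nia.
  have [e1 e2] : r = r' /\ B = B' by apply: mod_uniq E2; lia.
  subst r' B'.
  split => //; lia.
Qed.


Lemma cnt_lt (b : {perm 'I_n}) (r : {ffun 'I_n -> 'I_M}) (p : 'I_n) :
  cnt (b, r) p < p.+1 * M.
Proof.
rewrite cnt_formula; have := AB_sum b p; have := ltn_ord (r p).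
move: (nat_of_ord (r p)) (Acode b p) (Bcode b p) => rr A B.
case: rr => [|rr] /=; nia.
Qed.

Lemma S_less (S : {set 'I_n}) (x y : 'I_n) : x \in S -> y \in S -> x < y ->
  #|[set v in S | y < v]| < #|[set v in S | x < v]|.
Proof.
move=> xS yS xy; apply: proper_card; apply/properP; split.
  apply/subsetP => v; rewrite !inE => /andP [-> h] /=; exact: ltn_trans h.
by exists y; rewrite !inE ?yS ?xy ?ltnn.
Qed.

Lemma lehmer_step (b b' : {perm 'I_n}) (p : 'I_n) :
  (forall q : 'I_n, p < q -> b q = b' q) -> Acode b p = Acode b' p -> b p = b' p.
Proof.
move=> Hq HA.
pose S := [set v : 'I_n | [forall q : 'I_n, (p < q) ==> (b q != v)]].
have AS : forall c : {perm 'I_n}, (forall q : 'I_n, p < q -> b q = c q) ->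
    Acode c p = #|[set v in S | c p < v]|.
  move=> c Hc; rewrite /Acode -card_sum -(card_imset _ (@perm_inj _ c)).
  apply: eq_card => v; rewrite !inE; apply/imsetP/andP.
  - case=> l; rewrite inE => /andP [hl hv] ->; split => //.
    apply/forallP => q; apply/implyP => hq; rewrite Hc //.
    apply/eqP => /perm_inj E; move: hl hq; rewrite E; lia.
  - case=> /forallP hS hv; exists ((c^-1)%g v); last by rewrite permKV.
    rewrite inE permKV hv andbT.
    case: (ltngtP ((c^-1)%g v) p) => h //.
    + by have := hS ((c^-1)%g v); rewrite h /= Hc // permKV eqxx.
    + have E : (c^-1)%g v = p by apply: val_inj.
      by move: hv; rewrite -E permKV ltnn.
have inS : forall c : {perm 'I_n}, (forall q : 'I_n, p < q -> b q = c q) -> c p \in S.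
  move=> c Hc; rewrite inE; apply/forallP => q; apply/implyP => hq; rewrite Hc //.
  by apply/eqP => /perm_inj E; move: hq; rewrite E ltnn.
move: HA; rewrite (AS b (fun _ _ => erefl)) (AS b' Hq) => HA.
have bS := inS b (fun _ _ => erefl); have b'S := inS b' Hq.
case: (ltngtP (b p) (b' p)) => h.
- by have := S_less _ _ _ bS b'S h; rewrite HA ltnn.
- by have := S_less _ _ _ b'S bS h; rewrite HA ltnn.
- exact: val_inj.
Qed.

Lemma lehmer (b b' : {perm 'I_n}) : (forall p, Acode b p = Acode b' p) -> b = b'.
Proof.
move=> HA; apply/permP => p.
suff H : forall k (q : 'I_n), n - k <= q -> b q = b' q by apply: (H n); lia.
elim=> [|k IH] q hq; first by move: (ltn_ord q); lia.
case: (leqP (n - k) q) => h; first exact: IH.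
apply: lehmer_step => // q' hq'; apply: IH; lia.
Qed.

Notation N := (n * M).+1.

Definition Phi_map (w : G) : {ffun 'I_n -> 'I_N} := [ffun p : 'I_n => inord (cnt w p)].

Lemma cnt_le (w : G) (p : 'I_n) : cnt w p <= n * M.
Proof.
case: w => b r; have := cnt_lt b r p; have := ltn_ord p.
move=> h1 h2; apply: leq_trans (ltnW h2) _; by rewrite leq_mul2r h1 orbT.
Qed.

Lemma Phi_map_val (w : G) (p : 'I_n) : nat_of_ord (Phi_map w p) = cnt w p.
Proof. by rewrite ffunE inordK // ltnS cnt_le. Qed.

Lemma Phi_inj : injective Phi_map.
Proof.
move=> [b r] [b' r'] E.
have H : forall p, r p = r' p :> nat /\ Acode b p = Acode b' p.
  move=> p; have := congr1 (fun f : {ffun 'I_n -> 'I_N} => nat_of_ord (f p)) E; rewrite /= !Phi_map_val.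
  rewrite !cnt_formula => E2.
  exact: (f_inj _ _ _ _ _ _ _ (ltn_ord (r p)) (ltn_ord (r' p)) (AB_sum b p) (AB_sum b' p) E2).
have -> : b = b' by apply: lehmer => p; case: (H p).
congr (_, _); apply/ffunP => p; apply: val_inj; by case: (H p).
Qed.

Definition Qp (p : 'I_n) : pred 'I_N := fun c => c < p.+1 * M.

Lemma card_Qp p : #|Qp p| = p.+1 * M.
Proof.
rewrite -cardsE card_sum sum_lt; apply/minn_idPl.
by apply: leq_trans (leqnSn _); rewrite leq_mul2r ltn_ord orbT.
Qed.

Lemma image_Phi : Phi_map @: [set: G] = [set f | f \in family Qp].
Proof.
apply/eqP; rewrite eqEcard; apply/andP; split.
  apply/subsetP => f /imsetP [w _ ->]; rewrite inE; apply/familyP => p.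
  rewrite unfold_in /= Phi_map_val; case: w => b r; exact: cnt_lt.
rewrite (card_imset _ Phi_inj).
rewrite cardsE card_family foldrE big_map big_enum /=.
rewrite (eq_bigr (fun p : 'I_n => p.+1 * M)%N); last by move=> p _; rewrite card_Qp.
rewrite big_split /= prod_nat_const card_ord.
rewrite cardsT card_prod card_Sn card_ffun !card_ord.
rewrite fact_prod big_add1 /= big_mkord; apply: eq_leq; congr (_ * _).
Qed.


Local Open Scope ring_scope.

Lemma main_sum : \sum_(w : G) ('X^(L w) : {poly int}) = \prod_(p < n) qint (p.+1 * M)%N.
Proof.
transitivity (\sum_(w : G) \prod_(p < n) ('X^(Phi_map w p) : {poly int})).
  apply: eq_bigr => w _; rewrite L_cnt -prodrXr.
  by apply: eq_bigr => p _; rewrite Phi_map_val.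
transitivity (\sum_(f in Phi_map @: [set: G]) \prod_(p < n) ('X^(f p) : {poly int})).
  rewrite big_imset /=; last by move=> x y _ _; exact: Phi_inj.
  by apply: eq_bigl => w; rewrite inE.
rewrite image_Phi.
transitivity (\sum_(f in family Qp) \prod_(p < n) ('X^(f p) : {poly int})).
  by apply: eq_bigl => f; rewrite inE.
rewrite -(bigA_distr_big_dep Qp (fun p (c : 'I_N) => ('X^c : {poly int}))).
apply: eq_bigr => p _; rewrite /qint.
have le : (p.+1 * M <= N)%N by apply: leq_trans (leqnSn _); rewrite leq_mul2r ltn_ord orbT.
by rewrite (big_ord_narrow le).
Qed.

End Main.

Local Open Scope ring_scope.

Theorem corollary4p1 (m n : nat) (hm : (2 <= m)%N) (hn : (1 <= n)%N) :
  \sum_(w : Gm1n n m) ('X^(invt w) : {poly int}) = \sum_(w : Gm1n n m) 'X^(L w) /\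
  \sum_(w : Gm1n n m) 'X^(L w) = \prod_(1 <= i < n.+1) qint (i * m).
Proof.
case: m hm => [|m] // hm; split.
  by apply: eq_bigr => w _; rewrite invt_L.
rewrite main_sum big_add1 /= big_mkord.
by [].
Qed.
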